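(* Let $\tau=\tau_1\dotsm\tau_l$ be a weak composition with $l\ge 3$ and $\tau_1,\tau_2\ge 1$, and let $(G_1,u_1),\dots,(G_l,u_l)$ be rooted graphs. Let $G=S^\tau(G_1,\dots,G_l)$, and let $H=S^{\tau_3\dotsm\tau_l}(G_3,\dots,G_l)$, regarded as a rooted graph whose root is its center. Then \[ X_G=X_{S^{(\tau_1-1)\tau_2 1}(G_1,\,G_2,\,H)}+X_{G_1^{\tau_1-1}}\,X_{S^{\tau_2\dotsm\tau_l}(G_2,\dots,G_l)}-X_{P^{\tau_1+\tau_2-1}(G_1,G_2)}\,X_H. \]
   Context: All graphs are finite simple graphs. The chromatic symmetric function of a graph $G$ is $X_G=\sum_{\kappa}\prod_{v\in V(G)}x_{\kappa(v)}$, where $\kappa$ ranges over proper colorings $\kappa:V(G)\to\{1,2,\dots\}$. For a weak composition (sequence of nonnegative integers) $\tau=\tau_1\dotsm\tau_l$ and rooted graphs $(G_i,u_i)$, the spider-conjoined graph $S^\tau(G_1,\dots,G_l)$ is obtained as follows: take a center vertex $c$ and $l$ paths starting at $c$, pairwise disjoint except at $c$, the $i$-th of length $\tau_i$ with other end $s_i$ (so $s_i=c$ if $\tau_i=0$); then identify $u_i$ with $s_i$ for all $i$ (the $G_i$ being disjoint). Its center is $c$. For rooted graphs $(G,u)$, $(H,v)$ and $k\ge0$, $P^k(G,H)$ is obtained from the disjoint union of $G$ and $H$ by adding a path of length $k$ joining $u$ and $v$ (for $k=0$ identifying them), and $G^k=P^k(G,K_1)$ is $G$ with a pendant path of length $k$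 at its root. *)

(* Defs.v *)
From HB Require Import structures.
From mathcomp Require Import all_boot all_order all_algebra.
From mathcomp Require Import mpoly.

Set Implicit Arguments.
Unset Strict Implicit.
Unset Printing Implicit Defensive.

Import GRing.Theory.
Local Open Scope ring_scope.

Record graph := Graph {
  vert : finType;
  adj : rel vert;
  adj_sym : ssrbool.symmetric adj;
  adj_irr : irreflexive adj }.

Definition mk_adj (V : finType) (r : rel V) : rel V :=
  fun x y => (x != y) && (r x y || r y x).

Lemma mk_adj_sym (V : finType) (r : rel V) : ssrbool.symmetric (mk_adj r).
Proof. by move=> x y; rewrite /mk_adj eq_sym orbC. Qed.

Lemma mk_adj_irr (V : finType) (r : rel V) : irreflexive (mk_adj r).
Proof. by move=> x; rewrite /mk_adj eqxx. Qed.

Definition mkGraph (V : finType) (r : rel V) : graph :=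
  @Graph V (mk_adj r) (@mk_adj_sym V r) (@mk_adj_irr V r).

Record rooted_graph := RGraph { rg :> graph; root : vert rg }.

Definition path_graph (k : nat) : graph :=
  @mkGraph 'I_k.+1 (fun i j => i.+1 == j :> nat).

Definition K1 : rooted_graph := @RGraph (path_graph 0) (@ord0 0).

(* Glue G and H by identifying a : vert G with b : vert H
   (the graphs being disjoint).  Vertices: those of G, and those of H
   other than b (b being represented by a). *)
Definition glue_raw (G : graph) (a : vert G) (H : graph) (b : vert H) :
    rel (vert G + {y : vert H | y != b})%type :=
  fun x y => match x, y with
  | inl x, inl y => adj x y
  | inr x, inr y => adj (val x) (val y)
  | inl x, inr y => (x == a) && adj b (val y)
  | inr _, inl _ => false
  end.

Definition glue (G : graph) (a : vert G) (H : graph) (b : vert H) : graph :=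
  @mkGraph (vert G + {y : vert H | y != b})%type (@glue_raw G a H b).

Definition glue_l (G : graph) (a : vert G) (H : graph) (b : vert H)
  (x : vert G) : vert (glue a b) := inl x.
Arguments glue_l {G} a {H} b x.

Definition glue_r (G : graph) (a : vert G) (H : graph) (b : vert H)
  (y : vert H) : vert (glue a b) :=
  match insub y with Some y' => inr y' | None => inl a end.
Arguments glue_r {G} a {H} b y.

(* Leg of a spider: path of length k from the (future) center, with
   (G,u) attached by identifying u with the far end; rooted at the
   path end that becomes the center. *)
Definition path_end (k : nat) : vert (path_graph k) := @ord_max k.
Definition path_start (k : nat) : vert (path_graph k) := @ord0 k.

Definition leg (k : nat) (R : rooted_graph) : rooted_graph :=
  @RGraph (glue (path_end k) (root R)) (glue_l (path_end k) (root R) (path_start k)).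

Definition wedge (S L : rooted_graph) : rooted_graph :=
  @RGraph (glue (root S) (root L)) (glue_l (root S) (root L) (root S)).

(* Spider-conjoined graph S^tau(G_1,...,G_l), given as the list of pairs
   (tau_i, (G_i,u_i)); rooted at its center. *)
Definition spider (legs : seq (nat * rooted_graph)) : rooted_graph :=
  foldl (fun S p => wedge S (leg p.1 p.2)) K1 legs.

(* P^k(G,H): G and H joined by a path of length k between their roots. *)
Definition Pk (k : nat) (G H : rooted_graph) : graph :=
  glue (glue_r (root G) (path_start k) (path_end k)) (root H).

Definition pend (G : rooted_graph) (k : nat) : graph := Pk k G K1.

Definition proper (G : graph) (n : nat) (k : {ffun vert G -> 'I_n}) : bool :=
  [forall x, forall y, adj x y ==> (k x != k y)].

Definition chrom (n : nat) (G : graph) : {mpoly int[n]} :=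
  \sum_(k : {ffun vert G -> 'I_n} | proper k) \prod_(v : vert G) 'X_(k v).

(* Main.v *)
Require Import Defs.
From HB Require Import structures.
From mathcomp Require Import all_boot all_order all_algebra.
From mathcomp Require Import mpoly.
From mathcomp Require Import ring zify.
Import GRing.Theory.
Set Implicit Arguments.
Unset Strict Implicit.
Unset Printing Implicit Defensive.
Local Open Scope ring_scope.

Section Chrom.
Variable n : nat.
Local Notation R := {mpoly int[n]}.
Local Notation col V := {ffun V -> 'I_n}.

Definition wt (V : finType) (k : col V) : R := \prod_(v : V) 'X_(k v).
Definition wtx (V : finType) (r : V) (k : col V) : R :=
  \prod_(v | v != r) 'X_(k v).

Lemma wt_split (V : finType) (r : V) (k : col V) : wt k = 'X_(k r) * wtx r k.
Proof. by rewrite /wt (bigD1 r). Qed.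

Definition Fr (G : graph) (r : vert G) (i : 'I_n) : R :=
  \sum_(k : col (vert G) | Defs.proper k && (k r == i)) wtx r k.

Lemma properP (G : graph) (k : col (vert G)) :
  reflect (forall x y, adj x y -> k x != k y) (Defs.proper k).
Proof.
apply: (iffP forallP) => [H x y|H x].
  by move/forallP: (H x) => /(_ y) /implyP.
by apply/forallP=> y; apply/implyP; exact: H.
Qed.

Lemma sum_root (G : graph) (r : vert G) (h : 'I_n -> R) :
  \sum_(k : col (vert G) | Defs.proper k) wt k * h (k r)
  = \sum_i 'X_i * Fr r i * h i.
Proof.
rewrite (partition_big (fun k : col (vert G) => k r) predT) //=.
apply: eq_bigr => i _; rewrite /Fr mulr_sumr mulr_suml.
apply: eq_bigr => k /andP[_ /eqP <-]; rewrite (wt_split r); ring.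
Qed.

Lemma chrom_Fr (G : graph) (r : vert G) :
  chrom n G = \sum_i 'X_i * Fr r i.
Proof.
have := sum_root r (fun _ => 1); rewrite /chrom /= => E.
transitivity (\sum_(k : col (vert G) | Defs.proper k) wt k * 1).
  by apply: eq_bigr => k _; rewrite mulr1.
by rewrite E; apply: eq_bigr => i _; rewrite mulr1.
Qed.


Lemma prod_sub (T : finType) (b : T) (F : T -> R) :
  \prod_(y | y != b) F y = \prod_(x : {y : T | y != b}) F (val x).
Proof.
rewrite (reindex_omap (val : {y : T | y != b} -> T) insub); last first.
  by move=> i Pi; rewrite insubT.
apply: eq_bigl=> -[i iA]/=; rewrite iA insubT /=.
by apply/eqP; congr Some; apply: val_inj.
Qed.

Lemma adj_neq (X : graph) (x y : vert X) : adj x y -> x != y.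
Proof. by apply: contraTneq => ->; rewrite adj_irr. Qed.

Section Glue.
Variables (G H : graph) (a : vert G) (b : vert H).
Local Notation GL := (glue a b).

Definition gl (k : col (vert GL)) : col (vert G) := [ffun x => k (inl x)].
Definition gr (k : col (vert GL)) : col (vert H) := [ffun y => k (glue_r a b y)].
Definition gjoin (k1 : col (vert G)) (k2 : col (vert H)) : col (vert GL) :=
  [ffun v : (vert G + {y : vert H | y != b})%type =>
     match v with inl x => k1 x | inr y => k2 (val y) end].

Lemma glue_r_val (y : {y : vert H | y != b}) : glue_r a b (val y) = inr y.
Proof. by rewrite /glue_r valK. Qed.

Lemma glue_r_b : glue_r a b b = inl a.
Proof. by rewrite /glue_r insubF // eqxx. Qed.

Lemma gjoin_r (k1 : col (vert G)) (k2 : col (vert H)) y : k2 b = k1 a -> gjoin k1 k2 (glue_r a b y) = k2 y.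
Proof.
move=> e; rewrite /glue_r; case: insubP => [y' _ <-|]; rewrite ffunE //.
by move/negbNE/eqP ->.
Qed.

Lemma gjoin_l (k1 : col (vert G)) (k2 : col (vert H)) x : gjoin k1 k2 (inl x) = k1 x.
Proof. by rewrite ffunE. Qed.

Lemma gjoinK (k : col (vert GL)) : gjoin (gl k) (gr k) = k.
Proof.
apply/ffunP => -[x|y]; rewrite !ffunE //.
by rewrite glue_r_val.
Qed.

Lemma gsplit_gjoin (k1 : col (vert G)) (k2 : col (vert H)) : ((gl (gjoin k1 k2), gr (gjoin k1 k2)) == (k1, k2)) = (k2 b == k1 a).
Proof.
rewrite xpair_eqE.
have -> : gl (gjoin k1 k2) = k1 by apply/ffunP => x; rewrite !ffunE.
rewrite eqxx /=; apply/eqP/eqP => [<-|e].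
  by rewrite ffunE glue_r_b ffunE.
by apply/ffunP => y; rewrite ffunE gjoin_r.
Qed.

Lemma glue_sum (Phi : col (vert GL) -> R) :
  \sum_(k : col (vert GL)) Phi k =
  \sum_(k1 : col (vert G)) \sum_(k2 : col (vert H) | k2 b == k1 a) Phi (gjoin k1 k2).
Proof.
rewrite pair_big_dep /=.
rewrite [LHS](reindex_onto (fun p : col (vert G) * col (vert H) => gjoin p.1 p.2)
                           (fun k => (gl k, gr k))) /=; last by move=> k _; rewrite gjoinK.
by apply: eq_bigl => -[k1 k2] /=; rewrite gsplit_gjoin.
Qed.


Lemma glue_r_adj x y : adj x y -> adj (glue_r a b x) (glue_r a b y).
Proof.
move=> xy; rewrite /glue_r.
case: insubP => [x' nx vx|nx]; case: insubP => [y' ny vy|ny]; rewrite /= /mk_adj /=.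
- rewrite -vx -vy in xy; rewrite xy andbT.
  by apply/eqP => -[e]; move: xy; rewrite e adj_irr.
- move/negbNE/eqP: ny => ey; rewrite ey -vx in xy.
  by rewrite eqxx /= adj_sym xy.
- move/negbNE/eqP: nx => ex; rewrite ex -vy in xy.
  by rewrite eqxx /= xy.
- move/negbNE/eqP: nx => ex; move/negbNE/eqP: ny => ey.
  by move: xy; rewrite ex ey adj_irr.
Qed.

Lemma proper_gjoin (k1 : col (vert G)) (k2 : col (vert H)) :
  k2 b = k1 a -> Defs.proper (gjoin k1 k2) = Defs.proper k1 && Defs.proper k2.
Proof.
move=> e; apply/properP/andP => [P|[/properP P1 /properP P2]].
  split; apply/properP => x y xy.
    have := P (inl x) (inl y); rewrite !gjoin_l; apply.
    by rewrite /= /mk_adj /= xy andbT (adj_neq xy).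
  have := P (glue_r a b x) (glue_r a b y); rewrite !gjoin_r //; apply.
  exact: glue_r_adj.
move=> [x|x] [y|y]; rewrite /= /mk_adj /= !ffunE.
- by move=> /andP[_]; rewrite (adj_sym y x) orbb; exact: P1.
- by rewrite orbF => /andP[/eqP -> ay]; rewrite -e; exact: P2.
- by move=> /andP[/eqP -> ay]; rewrite -e eq_sym; exact: P2.
- by move=> /andP[_]; rewrite (adj_sym (sval y)) orbb; exact: P2.
Qed.

Lemma wt_glue (k : col (vert GL)) : wt k = wt (gl k) * wtx b (gr k).
Proof.
rewrite /wt /wtx big_sumType /=; congr (_ * _).
  by apply: eq_bigr => x _; rewrite ffunE.
by rewrite prod_sub; apply: eq_bigr => y _; rewrite ffunE glue_r_val.
Qed.

Lemma wtx_glue (v : vert G) (k : col (vert GL)) :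
  wtx (inl v : vert GL) k = wtx v (gl k) * wtx b (gr k).
Proof.
rewrite /wtx big_sumType /=; congr (_ * _).
  by apply: eq_bigr => x _; rewrite ffunE.
rewrite prod_sub; apply: eq_bigr => y _; rewrite ffunE glue_r_val //.
Qed.

Lemma glue_main (phi : col (vert G) -> R) (psi : col (vert H) -> R) :
  \sum_(k : col (vert GL) | Defs.proper k) phi (gl k) * psi (gr k) =
  \sum_(k1 : col (vert G) | Defs.proper k1) phi k1 *
     \sum_(k2 : col (vert H) | Defs.proper k2 && (k2 b == k1 a)) psi k2.
Proof.
rewrite big_mkcond glue_sum [RHS]big_mkcond; apply: eq_bigr => k1 _ /=.
transitivity (\sum_(k2 : col (vert H) | k2 b == k1 a)
   (if Defs.proper k1 && Defs.proper k2 then phi k1 * psi k2 else 0)).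
  apply: eq_bigr => k2 /eqP e; rewrite proper_gjoin //.
  have -> : gl (gjoin k1 k2) = k1 by apply/ffunP => x; rewrite !ffunE.
  by have -> : gr (gjoin k1 k2) = k2 by apply/ffunP => y; rewrite ffunE gjoin_r.
case: (Defs.proper k1) => /=; last by rewrite big1.
rewrite mulr_sumr big_mkcond [RHS]big_mkcond; apply: eq_bigr => k2 _ /=.
by case: (k2 b == k1 a); case: (Defs.proper k2).
Qed.


Lemma glue_Fl (v : vert G) i :
  Fr (inl v : vert GL) i =
  \sum_(k1 : col (vert G) | Defs.proper k1 && (k1 v == i)) wtx v k1 * Fr b (k1 a).
Proof.
rewrite /Fr big_mkcondr /=.
transitivity (\sum_(k : col (vert GL) | Defs.proper k)
   (fun k1 : col (vert G) => if k1 v == i then wtx v k1 else 0) (gl k) * wtx b (gr k)).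
  apply: eq_bigr => k _ /=; rewrite ffunE wtx_glue.
  by case: ifP; rewrite ?mul0r.
apply: etrans (glue_main (fun k1 : col (vert G) => if k1 v == i then wtx v k1 else 0) (wtx b)) _.
rewrite [RHS]big_mkcondr /=; apply: eq_bigr => k1 _.
by case: ifP; rewrite ?mul0r.
Qed.

Lemma glue_chrom :
  chrom n GL = \sum_(k1 : col (vert G) | Defs.proper k1) wt k1 * Fr b (k1 a).
Proof.
rewrite /chrom.
transitivity (\sum_(k : col (vert GL) | Defs.proper k) wt (gl k) * wtx b (gr k)).
  by apply: eq_bigr => k _; rewrite -wt_glue.
by rewrite glue_main.
Qed.

Lemma glue_chrom_r (y : vert H) (h : 'I_n -> R) :
  \sum_(k : col (vert GL) | Defs.proper k) wt k * h (k (glue_r a b y)) =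
  \sum_(k1 : col (vert G) | Defs.proper k1) wt k1 *
     \sum_(k2 : col (vert H) | Defs.proper k2 && (k2 b == k1 a)) wtx b k2 * h (k2 y).
Proof.
transitivity (\sum_(k : col (vert GL) | Defs.proper k)
    wt (gl k) * (fun k2 : col (vert H) => wtx b k2 * h (k2 y)) (gr k)).
  by apply: eq_bigr => k _ /=; rewrite wt_glue ffunE mulrA.
exact: (glue_main (@wt _) (fun k2 : col (vert H) => wtx b k2 * h (k2 y))).
Qed.

End Glue.


Section Path.

Lemma properP_path k (l : col (vert (path_graph k))) :
  Defs.proper l = [forall i : 'I_k, l (widen_ord (leqnSn k) i) != l (lift ord0 i)].
Proof.
apply/properP/forallP => [P i|P].
  apply: P; rewrite /= /mk_adj /= -val_eqE /= /bump leq0n add1n eqxx andbT.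
  by apply/eqP; lia.
have H1 : forall x y : 'I_k.+1, (x.+1 == y :> nat) -> l x != l y.
  move=> x y /eqP e.
  have xk : (x < k)%N by have := ltn_ord y; lia.
  have -> : x = widen_ord (leqnSn k) (Ordinal xk) by apply: val_inj.
  have -> : y = lift ord0 (Ordinal xk) by apply: val_inj; rewrite /= /bump leq0n add1n.
  exact: P.
move=> x y; rewrite /= /mk_adj /= => /andP[_ /orP[e|e]]; first exact: H1.
by rewrite eq_sym; exact: H1.
Qed.

Definition pcons k (c : 'I_n) (l : col 'I_k.+1) : col 'I_k.+2 :=
  [ffun j => if unlift ord0 j is Some j' then l j' else c].

Lemma pcons0 k c (l : col 'I_k.+1) : pcons c l ord0 = c.
Proof. by rewrite ffunE unlift_none. Qed.

Lemma pconsS k c (l : col 'I_k.+1) j : pcons c l (lift ord0 j) = l j.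
Proof. by rewrite ffunE liftK. Qed.

Lemma path_sum k (Phi : col 'I_k.+2 -> R) :
  \sum_(l : col 'I_k.+2) Phi l = \sum_(c : 'I_n) \sum_(l : col 'I_k.+1) Phi (pcons c l).
Proof.
rewrite pair_big /=.
rewrite [LHS](reindex (fun p : 'I_n * col 'I_k.+1 => pcons p.1 p.2)) //.
apply: onW_bij.
exists (fun l : col 'I_k.+2 => (l ord0, [ffun j => l (lift ord0 j)])).
  move=> [c l] /=; rewrite pcons0; congr (_, _).
  by apply/ffunP => j; rewrite ffunE pconsS.
move=> l; apply/ffunP => j; rewrite ffunE.
by case: unliftP => [j' ->|->]; rewrite ?ffunE.
Qed.

Lemma proper_pcons k c (l : col 'I_k.+1) :
  Defs.proper (pcons c l : col (vert (path_graph k.+1))) =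
  (c != l ord0) && Defs.proper (l : col (vert (path_graph k))).
Proof.
rewrite !properP_path.
have w0 : widen_ord (leqnSn k.+1) (ord0 : 'I_k.+1) = ord0 :> 'I_k.+2 by apply: val_inj.
have wS : forall j : 'I_k, widen_ord (leqnSn k.+1) (lift ord0 j) =
            lift ord0 (widen_ord (leqnSn k) j) by move=> j; apply: val_inj.
apply/forallP/andP => [P|[P0 /forallP P] i].
  split; first by have := P ord0; rewrite w0 pcons0 pconsS.
  by apply/forallP => j; have := P (lift ord0 j); rewrite wS !pconsS.
case: (unliftP ord0 i) => [j ->|->]; first by rewrite wS !pconsS.
by rewrite w0 pcons0 pconsS.
Qed.

Lemma wtx_pcons k c (l : col 'I_k.+1) : wtx ord0 (pcons c l) = wt l.
Proof.
rewrite /wtx /wt big_mkcond big_ord_recl /= mul1r.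
by apply: eq_bigr => j _; rewrite pconsS.
Qed.

Definition PS (k : nat) (i : 'I_n) (g : 'I_n -> R) : R :=
  \sum_(l : col (vert (path_graph k)) | Defs.proper l && (l (path_start k) == i))
     wtx (path_start k) l * g (l (path_end k)).

Definition Dop (f : 'I_n -> R) (j : 'I_n) : R := \sum_(c | c != j) 'X_c * f c.

Lemma PS_0 i g : PS 0 i g = g i.
Proof.
rewrite /PS.
have pr : forall l : col (vert (path_graph 0)), Defs.proper l.
  by move=> l; rewrite properP_path; apply/forallP => -[].
have -> : path_end 0 = path_start 0 by apply: val_inj.
rewrite (big_pred1 [ffun => i]); last first.
  move=> l; rewrite pr /=; apply/eqP/eqP => [e|->]; last by rewrite ffunE.
  by apply/ffunP => x; rewrite ffunE (ord1 x).
rewrite ffunE /wtx big_pred0 ?mul1r // => v.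
by rewrite (ord1 v) eqxx.
Qed.

Lemma PS_S k i g : PS k.+1 i g = \sum_(j | j != i) 'X_j * PS k j g.
Proof.
rewrite /PS big_mkcond path_sum.
have mS : (path_end k.+1) = lift ord0 (path_end k) by apply: val_inj.
rewrite (bigD1 i) //= [X in _ + X]big1 ?addr0; last first.
  by move=> c ci; apply: big1 => l _; rewrite /path_start pcons0 (negbTE ci) andbF.
transitivity (\sum_(l : col 'I_k.+1 | (i != l ord0) && Defs.proper (l : col (vert (path_graph k))))
     wt l * g (l (path_end k))).
  rewrite [RHS]big_mkcond; apply: eq_bigr => l _.
  by rewrite proper_pcons /path_start pcons0 eqxx andbT mS pconsS wtx_pcons.
rewrite (partition_big (fun l : col 'I_k.+1 => l ord0) (fun j => j != i)); last first.
  by move=> l /andP[+ _]; rewrite eq_sym.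
apply: eq_bigr => j ji; rewrite mulr_sumr.
apply: eq_big => l.
  case: (eqVneq (l ord0) j) => [->|ne]; last by rewrite !andbF.
  by rewrite eq_sym ji.
by move=> /andP[_ /eqP e]; rewrite (wt_split ord0) e mulrA.
Qed.

Lemma PS_iter k i g : PS k i g = iter k Dop g i.
Proof.
elim: k i => [|k IH] i; first by rewrite PS_0.
by rewrite PS_S /= /Dop; apply: eq_bigr => j _; rewrite IH.
Qed.

End Path.

Definition FR (Rg : rooted_graph) (i : 'I_n) : R := Fr (Defs.root Rg) i.

Lemma FR_wedge S L i : FR (wedge S L) i = FR S i * FR L i.
Proof.
rewrite /FR /wedge /= /glue_l glue_Fl mulr_suml.
by apply: eq_bigr => k /andP[_ /eqP ->].
Qed.

Lemma FR_leg k Rg i : FR (leg k Rg) i = iter k Dop (FR Rg) i.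
Proof. by rewrite /FR /leg /= /glue_l glue_Fl -PS_iter. Qed.

Lemma FR_K1 i : FR K1 i = 1.
Proof.
have := PS_0 i (fun _ => 1); rewrite /PS => <-.
by apply: eq_bigr => l _; rewrite mulr1.
Qed.

Lemma FR_spider S legs i :
  FR (foldl (fun S p => wedge S (leg p.1 p.2)) S legs) i =
  FR S i * \prod_(p <- legs) FR (leg p.1 p.2) i.
Proof.
elim: legs S => [|p legs IH] S /=; first by rewrite big_nil mulr1.
by rewrite IH FR_wedge big_cons mulrA.
Qed.

Lemma chrom_FR (Rg : rooted_graph) : chrom n Rg = \sum_i 'X_i * FR Rg i.
Proof. exact: chrom_Fr. Qed.

Lemma chrom_Pk k (G H : rooted_graph) :
  chrom n (Pk k G H) = \sum_i 'X_i * FR G i * iter k Dop (FR H) i.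
Proof.
rewrite /Pk glue_chrom.
rewrite (glue_chrom_r (Defs.root G) (path_start k) (path_end k) (Fr (Defs.root H))).
transitivity (\sum_(k1 : col (vert G) | Defs.proper k1)
    wt k1 * (fun j => PS k j (Fr (Defs.root H))) (k1 (Defs.root G))); first by [].
apply: etrans (sum_root (Defs.root G) (fun j => PS k j (Fr (Defs.root H)))) _.
by apply: eq_bigr => i _; rewrite PS_iter.
Qed.

Lemma DE (f : 'I_n -> R) j : Dop f j = \sum_i 'X_i * f i - 'X_j * f j.
Proof. by rewrite /Dop [in RHS](bigD1 j) //=; ring. Qed.

Lemma adjD1 (f g : 'I_n -> R) :
  \sum_i 'X_i * f i * Dop g i = \sum_i 'X_i * Dop f i * g i.
Proof.
have E : forall f g : 'I_n -> R, \sum_i 'X_i * f i * Dop g i =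
   (\sum_i 'X_i * f i) * (\sum_i 'X_i * g i) - \sum_i 'X_i * 'X_i * f i * g i.
  move=> f' g'; rewrite mulr_suml -sumrB; apply: eq_bigr => i _; rewrite DE; ring.
rewrite E.
transitivity (\sum_i 'X_i * g i * Dop f i).
  by rewrite E mulrC; congr (_ - _); apply: eq_bigr => i _; ring.
by apply: eq_bigr => i _; ring.
Qed.

Lemma adjD m (f g : 'I_n -> R) :
  \sum_i 'X_i * f i * iter m Dop g i = \sum_i 'X_i * iter m Dop f i * g i.
Proof.
elim: m f => [|m IH] f //=.
by rewrite adjD1 IH; apply: eq_bigr => i _; rewrite -iterSr.
Qed.

Lemma final_alg (A B h : 'I_n -> R) :
  \sum_i 'X_i * (Dop A i * B i * h i) =
  \sum_i 'X_i * (A i * B i * Dop h i) + (\sum_i 'X_i * A i) * (\sum_i 'X_i * (B i * h i))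
  - (\sum_i 'X_i * (A i * B i)) * (\sum_i 'X_i * h i).
Proof.
have e1 : \sum_i 'X_i * (Dop A i * B i * h i) =
   (\sum_i 'X_i * A i) * (\sum_i 'X_i * (B i * h i)) - \sum_i 'X_i * 'X_i * A i * B i * h i.
  by rewrite mulr_sumr -sumrB; apply: eq_bigr => i _; rewrite DE; ring.
have e2 : \sum_i 'X_i * (A i * B i * Dop h i) =
   (\sum_i 'X_i * h i) * (\sum_i 'X_i * (A i * B i)) - \sum_i 'X_i * 'X_i * A i * B i * h i.
  by rewrite mulr_sumr -sumrB; apply: eq_bigr => i _; rewrite DE; ring.
rewrite e1 e2; ring.
Qed.

End Chrom.

Theorem proposition4p1 (t1 t2 : nat) (G1 G2 : rooted_graph)
    (rest : seq (nat * rooted_graph)) :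
  (0 < size rest)%N -> (1 <= t1)%N -> (1 <= t2)%N ->
  let G := spider [:: (t1, G1), (t2, G2) & rest] in
  let H := spider rest in
  forall n : nat,
    chrom n G =
      chrom n (spider [:: (t1.-1, G1); (t2, G2); (1%N, H)])
      + chrom n (pend G1 t1.-1) * chrom n (spider ((t2, G2) :: rest))
      - chrom n (Pk (t1 + t2).-1 G1 G2) * chrom n H.
Proof.
move=> _ h1 _ G H n; rewrite /G /H /pend.
set A := iter t1.-1 (@Dop n) (FR G1).
set B := iter t2 (@Dop n) (FR G2).
set h := @FR n (spider rest).
have Hh : forall i, h i = \prod_(p <- rest) FR (leg p.1 p.2) i.
  by move=> i; rewrite /h /spider FR_spider FR_K1 mul1r.
have EG : chrom n (spider [:: (t1, G1), (t2, G2) & rest]) =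
          \sum_i 'X_i * (Dop A i * B i * h i).
  rewrite chrom_FR; apply: eq_bigr => i _; rewrite Hh /spider /= FR_spider.
  by rewrite !FR_wedge FR_K1 mul1r !FR_leg /A -iterS prednK.
have E1 : chrom n (spider [:: (t1.-1, G1); (t2, G2); (1%N, spider rest)]) =
          \sum_i 'X_i * (A i * B i * Dop h i).
  rewrite chrom_FR; apply: eq_bigr => i _; rewrite /spider /=.
  by rewrite !FR_wedge FR_K1 mul1r !FR_leg.
have E2 : chrom n (Pk t1.-1 G1 K1) = \sum_i 'X_i * A i.
  rewrite chrom_Pk adjD; apply: eq_bigr => i _; by rewrite FR_K1 mulr1.
have E3 : chrom n (spider ((t2, G2) :: rest)) = \sum_i 'X_i * (B i * h i).
  rewrite chrom_FR; apply: eq_bigr => i _; rewrite Hh /spider /= FR_spider.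
  by rewrite !FR_wedge FR_K1 mul1r !FR_leg.
have E4 : chrom n (Pk (t1 + t2).-1 G1 G2) = \sum_i 'X_i * (A i * B i).
  have -> : (t1 + t2).-1 = (t1.-1 + t2)%N by rewrite -(prednK h1).
  rewrite chrom_Pk.
  transitivity (\sum_i 'X_i * FR G1 i * iter t1.-1 (@Dop n) B i).
    by apply: eq_bigr => i _; rewrite iterD.
  by rewrite adjD; apply: eq_bigr => i _; rewrite mulrA.
have E5 : chrom n (spider rest) = \sum_i 'X_i * h i by rewrite chrom_FR.
rewrite EG E1 E2 E3 E4 E5; exact: final_alg.
Qed.
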